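(* Let $(\mathbf{x}_i,y_i)_{i=1}^n\subset\mathbb{R}^d\times\{\pm1\}$ satisfy $\|\mathbf{x}_i\|\le 1$ for all $i$, and suppose there are $\gamma>0$ and a unit vector $\mathbf{w}_*$ with $y_i\mathbf{x}_i^\top\mathbf{w}_*\ge\gamma$ for all $i$. Let $L(\mathbf{w})=\frac1n\sum_{i=1}^n\ln\big(1+\exp(-y_i\mathbf{x}_i^\top\mathbf{w})\big)$ and run gradient descent $\mathbf{w}_t=\mathbf{w}_{t-1}-\eta\nabla L(\mathbf{w}_{t-1})$ from $\mathbf{w}_0=0$. Let $T$ be an integer with $T\ge 120\max\{e,n\}/\gamma^2$ and set $\eta:=\gamma^2T/120$. Then $\tau:=\frac{60}{\gamma^2}\max\big\{\eta,n,e,\frac{\eta+n}{\eta}\ln\frac{\eta+n}{\eta}\big\}\le T/2$, and \[L(\mathbf{w}_T)\le 480\,\frac{\ln^2(\gamma^4T^2)}{\gamma^4T^2}.\] *)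

(* Defs.v *)
From HB Require Import structures.
From mathcomp Require Import all_boot all_order all_algebra.
From mathcomp Require Import all_classical all_reals all_analysis.
Set Implicit Arguments. Unset Strict Implicit. Unset Printing Implicit Defensive.
Import Order.TTheory GRing.Theory Num.Theory.
Import numFieldNormedType.Exports.
Local Open Scope ring_scope.

Section Defs.
Variables (R : realType) (d : nat).

Definition dotp (x w : 'rV[R]_d) : R := \sum_(j < d) x 0 j * w 0 j.
Definition enorm (x : 'rV[R]_d) : R := Num.sqrt (\sum_(j < d) x 0 j ^+ 2).

Definition ebasis (j : 'I_d) : 'rV[R]_d := delta_mx 0 j.

Definition grad (f : 'rV[R]_d -> R) (w : 'rV[R]_d) : 'rV[R]_d :=
  \row_(j < d) derive f w (ebasis j).

Definition logistic_loss (n : nat) (x : 'I_n -> 'rV[R]_d) (y : 'I_n -> R)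
  (w : 'rV[R]_d) : R :=
  (n%:R)^-1 * \sum_(i < n) ln (1 + expR (- (y i * dotp (x i) w))).

Fixpoint gd (f : 'rV[R]_d -> R) (eta : R) (t : nat) : 'rV[R]_d :=
  match t with
  | 0 => 0
  | t'.+1 => gd f eta t' - eta *: grad f (gd f eta t')
  end.

End Defs.

(* Main.v *)
Require Import Defs.
From HB Require Import structures.
From mathcomp Require Import all_boot all_order all_algebra.
From mathcomp Require Import all_classical all_reals all_analysis.
From mathcomp Require Import ring lra zify.
Import Order.TTheory GRing.Theory Num.Theory.
Import numFieldNormedType.Exports.
Local Open Scope ring_scope.


Definition lg {R : realType} (z : R) := ln (1 + expR (- z)).
Definition gg {R : realType} (z : R) := expR (- z) / (1 + expR (- z)).

Lemma gg_gt0 {R : realType} (z : R) : 0 < gg z.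
Proof. by rewrite /gg divr_gt0 // ?addr_gt0 // expR_gt0. Qed.

Lemma gg_lt1 {R : realType} (z : R) : gg z < 1.
Proof.
have h := expR_gt0 (- z).
by rewrite /gg ltr_pdivrMr ?mul1r ?addr_gt0 // ltrDr.
Qed.

Lemma lg_le_exp {R : realType} (z : R) : lg z <= expR (- z).
Proof. apply: le_ln1Dx; have := expR_gt0 (- z); lra. Qed.

Lemma lg_gt0 {R : realType} (z : R) : 0 < lg z.
Proof. by apply: ln_gt0; rewrite ltrDl expR_gt0. Qed.

Lemma gg_le_lg {R : realType} (z : R) : gg z <= lg z.
Proof.
set u := expR (- z). have u0 : 0 < u by exact: expR_gt0.
have v0 : 0 < (1 + u)^-1 by rewrite invr_gt0 addr_gt0.
have := le_ln1Dx (x := (1 + u)^-1 - 1) ltac:(lra).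
rewrite addrC subrK lnV ?posrE ?addr_gt0 // => h.
rewrite /gg /lg -/u.
have -> : u / (1 + u) = 1 - (1 + u)^-1 by field; lra.
lra.
Qed.

Lemma lg_le2gg {R : realType} (z : R) : gg z <= 2/5 -> lg z <= 2 * gg z.
Proof.
rewrite /gg /lg; set u := expR (- z). have u0 : 0 < u by exact: expR_gt0.
rewrite ler_pdivrMr ?addr_gt0 // => h.
apply: le_trans (le_ln1Dx _) _; first lra.
rewrite mulrA ler_pdivlMr ?addr_gt0 //; nra.
Qed.


Lemma lg_diff {R : realType} (z z' : R) :
  lg z' - lg z = ln (1 + gg z * (expR (- (z' - z)) - 1)).
Proof.
rewrite /lg /gg; set A := expR (- z); set r := expR (- (z' - z)).
have A0 : 0 < A by exact: expR_gt0.
have r0 : 0 < r by exact: expR_gt0.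
have -> : expR (- z') = A * r by rewrite /A /r -expRD; congr expR; ring.
rewrite -ln_div ?posrE ?addr_gt0 ?mulr_gt0 //; congr ln; field; lra.
Qed.

Lemma lg_convex {R : realType} (z z' : R) : lg z - gg z * (z' - z) <= lg z'.
Proof.
have := lg_diff z z'.
set p := gg z; set r := expR (- (z' - z)).
have p0 : 0 < p := gg_gt0 z; have p1 : p < 1 := gg_lt1 z; have r0 : 0 < r by exact: expR_gt0.
have h0 : p * ln r + (1 - p) * ln 1 <= ln (p * r + (1 - p) * 1).
  exact: (@concave_ln R (Itv01 (ltW p0) (ltW p1)) r 1 r0 ltr01).
move: h0; rewrite ln1 mulr0 addr0 /r expRK.
have -> : p * expR (- (z' - z)) + (1 - p) * 1 = 1 + p * (expR (- (z' - z)) - 1) by ring.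
move=> h1 h2; lra.
Qed.

Lemma lg_local {R : realType} (z dl : R) : `|dl| <= 2/5 ->
  lg (z + dl) <= lg z - gg z * dl + 5/3 * gg z * dl ^+ 2.
Proof.
move=> hd.
have := lg_diff z (z + dl).
have -> : z + dl - z = dl by ring.
set p := gg z; set r := expR (- dl).
have p0 : 0 < p := gg_gt0 z; have p1 : p < 1 := gg_lt1 z; have r0 : 0 < r by exact: expR_gt0.
have hd' : -(2/5) <= dl <= 2/5 by rewrite -ler_norml.
have e1 := expR_ge1Dx dl.
have er : r * expR dl = 1 by rewrite /r expRN mulVf // gt_eqF // expR_gt0.
have rb : r <= 1 - dl + 5/3 * dl ^+ 2.
  have h : r * (1 + dl) <= 1.
    by apply: le_trans (_ : r * expR dl <= 1); [apply: ler_wpM2l; [exact: ltW | exact: e1] | rewrite er].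
  have q : 1 <= (1 + dl) * (1 - dl + 5/3 * dl ^+ 2) by nra.
  nra.
have pr0 : 0 < p * r by exact: mulr_gt0.
have := le_ln1Dx (x := p * (r - 1)) ltac:(rewrite mulrBr mulr1; lra).
move=> h1 h2. nra.
Qed.


Lemma is_derive_affine {R : realType} (a b t : R) :
  is_derive t 1 (fun s : R => - (s * a + b)) (- a).
Proof.
have h1 : is_derive t (1:R) (fun s : R => s * a) a.
  have := @is_deriveM R R (@id R) (cst a) t 1 1 0 (is_derive_id _ _) (is_derive_cst _ _ _).
  move=> h; apply: is_derive_eq h _.
  by rewrite /= scaler0 add0r /GRing.scale /= mulr1.
have h2 := @is_deriveD R R R (fun s : R => s * a) (cst b) t 1 a 0 h1 (is_derive_cst _ _ _).
have h3 := @is_deriveN R R R _ t 1 _ h2.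
apply: is_derive_eq h3 _; by rewrite addr0.
Qed.

Lemma is_derive_lg {R : realType} (a b : R) :
  is_derive (0:R) 1 (fun s : R => lg (s * a + b)) (- gg b * a).
Proof.
have e1 := @is_derive_affine R a b 0.
have e2 : is_derive (- (0 * a + b)) 1 (fun s : R => 1 + expR s) (expR (- (0 * a + b))).
  have := @is_deriveD R R R (cst 1) expR (- (0 * a + b)) 1 0 _ (is_derive_cst _ _ _) (is_derive_expR _).
  by move=> h; apply: is_derive_eq h _; rewrite add0r.
have e3 : is_derive (1 + expR (- (0 * a + b))) 1 (@ln R) (1 + expR (- (0 * a + b)))^-1.
  by apply: is_derive1_ln; rewrite addr_gt0 // expR_gt0.
have e23 := @is_derive1_comp R (@ln R) (fun s : R => 1 + expR s) _ _ _ e3 e2.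
have e := @is_derive1_comp R (@ln R \o (fun s : R => 1 + expR s)) (fun s : R => - (s * a + b)) _ _ _ e23 e1.
apply: is_derive_eq e _.
rewrite /gg mul0r add0r /=; field.
by rewrite gt_eqF // addr_gt0 // expR_gt0.
Qed.


Lemma dotpC {R : realType} {d : nat} (a b : 'rV[R]_d) : dotp a b = dotp b a.
Proof. by apply: eq_bigr => j _; rewrite mulrC. Qed.

Lemma dotpDr {R : realType} {d : nat} (a b c : 'rV[R]_d) :
  dotp a (b + c) = dotp a b + dotp a c.
Proof. by rewrite /dotp -big_split; apply: eq_bigr => j _; rewrite mxE mulrDr. Qed.

Lemma dotpZr {R : realType} {d : nat} (a b : 'rV[R]_d) (k : R) :
  dotp a (k *: b) = k * dotp a b.
Proof. by rewrite /dotp mulr_sumr; apply: eq_bigr => j _; rewrite mxE mulrCA. Qed.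

Lemma dotpNr {R : realType} {d : nat} (a b : 'rV[R]_d) :
  dotp a (- b) = - dotp a b.
Proof. by rewrite -scaleN1r dotpZr mulN1r. Qed.

Lemma dotpBr {R : realType} {d : nat} (a b c : 'rV[R]_d) :
  dotp a (b - c) = dotp a b - dotp a c.
Proof. by rewrite dotpDr dotpNr. Qed.

Lemma dotp0r {R : realType} {d : nat} (a : 'rV[R]_d) : dotp a 0 = 0.
Proof. by rewrite /dotp big1 // => j _; rewrite mxE mulr0. Qed.

Lemma dotp_ebasis {R : realType} {d : nat} (a : 'rV[R]_d) j :
  dotp a (@ebasis R d j) = a 0 j.
Proof.
rewrite /dotp /ebasis (bigD1 j) //= big1 ?addr0; first by rewrite mxE !eqxx mulr1.
by move=> k kj; rewrite mxE (negbTE kj) andbF mulr0.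
Qed.

Lemma derive_L {R : realType} {d n : nat} (x : 'I_n -> 'rV[R]_d) (y : 'I_n -> R)
  (w v : 'rV[R]_d) :
  derive (logistic_loss x y) w v =
  - (n%:R^-1 * \sum_(i < n) gg (y i * dotp (x i) w) * (y i * dotp (x i) v)).
Proof.
set a := fun i => y i * dotp (x i) v.
set b := fun i => y i * dotp (x i) w.
have E : derive (logistic_loss x y) w v =
   derive (n%:R^-1 \*: \sum_(i < n) (fun s : R => lg (s * a i + b i))) 0 1.
  rewrite /derive; congr lim; f_equal; apply/funext => h /=.
  rewrite fct_sumE /= /logistic_loss /lg.
  congr (_ *: (_ - _)); last first.
    rewrite /GRing.scale /=; congr (_ * _); apply: eq_bigr => i _.
    by rewrite /b; congr (ln (1 + expR (- _))); ring.
  rewrite /GRing.scale /= mulr1 addr0; congr (_ * _); apply: eq_bigr => i _.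
  by rewrite dotpDr dotpZr /a /b; congr (ln (1 + expR (- _))); ring.
rewrite E.
have H : is_derive (0:R) 1 (n%:R^-1 \*: \sum_(i < n) (fun s : R => lg (s * a i + b i)))
   (n%:R^-1 *: \sum_(i < n) (- gg (b i) * a i)).
  apply: is_deriveZ; apply: is_derive_sum => i; exact: is_derive_lg.
rewrite (@derive_val _ _ _ _ _ _ _ H) /GRing.scale /= -mulrN -sumrN.
by congr (_ * _); apply: eq_bigr => i _; rewrite mulNr.
Qed.

Lemma grad_entry {R : realType} {d n : nat} (x : 'I_n -> 'rV[R]_d) (y : 'I_n -> R)
  (w : 'rV[R]_d) j :
  grad (logistic_loss x y) w 0 j =
  - (n%:R^-1 * \sum_(i < n) gg (y i * dotp (x i) w) * (y i * x i 0 j)).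
Proof.
rewrite /grad mxE derive_L; congr (- (_ * _)); apply: eq_bigr => i _.
by rewrite dotp_ebasis.
Qed.

Lemma dotp_grad {R : realType} {d n : nat} (x : 'I_n -> 'rV[R]_d) (y : 'I_n -> R)
  (w u : 'rV[R]_d) :
  dotp u (grad (logistic_loss x y) w) =
  - (n%:R^-1 * \sum_(i < n) gg (y i * dotp (x i) w) * (y i * dotp (x i) u)).
Proof.
rewrite {1}/dotp.
under eq_bigr => j _ do rewrite grad_entry.
have -> : \sum_(i < n) gg (y i * dotp (x i) w) * (y i * dotp (x i) u)
  = \sum_(j < d) \sum_(i < n) gg (y i * dotp (x i) w) * (y i * x i 0 j) * u 0 j.
  rewrite exchange_big /=; apply: eq_bigr => i _.
  rewrite [X in _ * (_ * X)]/dotp !mulr_sumr; apply: eq_bigr => j _; ring.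
rewrite mulr_sumr -sumrN; apply: eq_bigr => j _.
by rewrite -mulr_suml; ring.
Qed.


Lemma dotp_ge0 {R : realType} {d : nat} (a : 'rV[R]_d) : 0 <= dotp a a.
Proof. by apply: sumr_ge0 => j _; rewrite -expr2 sqr_ge0. Qed.

Lemma dotpBl {R : realType} {d : nat} (a b c : 'rV[R]_d) :
  dotp (b - c) a = dotp b a - dotp c a.
Proof. by rewrite dotpC dotpBr !(dotpC a). Qed.

Lemma dotpZl {R : realType} {d : nat} (a b : 'rV[R]_d) (k : R) :
  dotp (k *: b) a = k * dotp b a.
Proof. by rewrite dotpC dotpZr dotpC. Qed.

Lemma CS {R : realType} {d : nat} (a b : 'rV[R]_d) :
  dotp a b ^+ 2 <= dotp a a * dotp b b.
Proof.
have [vv0|vvp] := eqVneq (dotp b b) 0.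
  have bj : forall j, b 0 j = 0.
    move=> j; have := @psumr_eq0P R 'I_d xpredT (fun j => b 0 j * b 0 j).
    move=> /(_ _ vv0 j isT) h; have {}h := h (fun k _ => ltac:(rewrite -expr2 sqr_ge0 //)).
    move: h.
    by move/eqP; rewrite mulf_eq0 orbb => /eqP.
  have -> : dotp a b = 0 by rewrite /dotp big1 // => j _; rewrite bj mulr0.
  by rewrite vv0 expr0n /= mulr0.
have vv : 0 < dotp b b by rewrite lt_neqAle eq_sym vvp dotp_ge0.
set p := dotp b b; set q := dotp a b.
have := dotp_ge0 (p *: a - q *: b).
rewrite dotpBl !dotpZl !dotpBr !dotpZr (dotpC b a) -/q -/p.
move=> h.
have h2 : 0 <= p * (p * dotp a a - q ^+ 2) by rewrite expr2; nra.
rewrite pmulr_rge0 // subr_ge0 in h2; lra.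
Qed.

Lemma enorm_le1 {R : realType} {d : nat} (a : 'rV[R]_d) : enorm a <= 1 -> dotp a a <= 1.
Proof.
rewrite /enorm => h.
have e : \sum_(j < d) a 0 j ^+ 2 = dotp a a by apply: eq_bigr => j _; rewrite expr2.
rewrite e in h; have := sqr_sqrtr (dotp_ge0 a).
move=> <-; have s0 := sqrtr_ge0 (dotp a a).
rewrite expr2; nra.
Qed.

Lemma enorm_eq1 {R : realType} {d : nat} (a : 'rV[R]_d) : enorm a = 1 -> dotp a a = 1.
Proof.
rewrite /enorm => h.
have e : \sum_(j < d) a 0 j ^+ 2 = dotp a a by apply: eq_bigr => j _; rewrite expr2.
rewrite e in h; have := sqr_sqrtr (dotp_ge0 a).
by rewrite h expr1n.
Qed.


Definition GG {R : realType} {d n : nat} (x : 'I_n -> 'rV[R]_d) (y : 'I_n -> R) (w : 'rV[R]_d) :=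
  n%:R^-1 * \sum_(i < n) gg (y i * dotp (x i) w).

Lemma LLE {R : realType} {d n : nat} (x : 'I_n -> 'rV[R]_d) (y : 'I_n -> R) w :
  logistic_loss x y w = n%:R^-1 * \sum_(i < n) lg (y i * dotp (x i) w).
Proof. by []. Qed.

Lemma GG_ge0 {R : realType} {d n : nat} (x : 'I_n -> 'rV[R]_d) (y : 'I_n -> R) w :
  0 <= GG x y w.
Proof. by rewrite /GG mulr_ge0 // sumr_ge0 // => i _; exact: ltW (gg_gt0 _). Qed.

Lemma GG_le1 {R : realType} {d n : nat} (x : 'I_n -> 'rV[R]_d) (y : 'I_n -> R) w :
  GG x y w <= 1.
Proof.
rewrite /GG; case: n x y => [|n] x y; first by rewrite big_ord0 mulr0.
have : \sum_(i < n.+1) gg (y i * dotp (x i) w) <= \sum_(i < n.+1) (1:R).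
  by apply: ler_sum => i _; exact: ltW (gg_lt1 _).
rewrite sumr_const card_ord => h.
rewrite ler_pdivrMl ?ltr0n // mulr1; apply: le_trans h _.
by rewrite -[X in _ <= X]mulr_natr mul1r.
Qed.

Lemma GG_le_L {R : realType} {d n : nat} (x : 'I_n -> 'rV[R]_d) (y : 'I_n -> R) w :
  GG x y w <= logistic_loss x y w.
Proof.
rewrite /GG LLE ler_wpM2l ?invr_ge0 ?ler0n //.
by apply: ler_sum => i _; exact: gg_le_lg.
Qed.

Lemma L_ge0 {R : realType} {d n : nat} (x : 'I_n -> 'rV[R]_d) (y : 'I_n -> R) w :
  0 <= logistic_loss x y w.
Proof. exact: le_trans (GG_ge0 x y w) (GG_le_L x y w). Qed.

Lemma L_gt0 {R : realType} {d n : nat} (x : 'I_n -> 'rV[R]_d) (y : 'I_n -> R) w :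
  (0 < n)%N -> 0 < logistic_loss x y w.
Proof.
case: n x y => [//|n] x y _; rewrite LLE mulr_gt0 ?invr_gt0 ?ltr0n //.
rewrite (bigD1 ord0) //=; apply: (lt_le_trans (lg_gt0 (y ord0 * dotp (x ord0) w))).
by rewrite lerDl sumr_ge0 // => i _; exact: ltW (lg_gt0 _).
Qed.

Lemma gg_le_nGG {R : realType} {d n : nat} (x : 'I_n -> 'rV[R]_d) (y : 'I_n -> R) w i :
  gg (y i * dotp (x i) w) <= n%:R * GG x y w.
Proof.
have n0 : (0 < n)%N := leq_ltn_trans (leq0n i) (ltn_ord i).
rewrite /GG mulrA mulfV ?pnatr_eq0 -?lt0n // mul1r.
rewrite (bigD1 i) //= lerDl sumr_ge0 // => k _; exact: ltW (gg_gt0 _).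
Qed.

Lemma L_le_2GG {R : realType} {d n : nat} (x : 'I_n -> 'rV[R]_d) (y : 'I_n -> R) w :
  n%:R * GG x y w <= 2/5 -> logistic_loss x y w <= 2 * GG x y w.
Proof.
move=> h; rewrite LLE /GG mulrCA ler_wpM2l ?invr_ge0 ?ler0n // mulr_sumr.
apply: ler_sum => i _; apply: lg_le2gg.
exact: le_trans (gg_le_nGG x y w i) h.
Qed.


Lemma le_sqrt_abs {R : realType} (t N2 : R) : 0 <= N2 -> t ^+ 2 <= N2 -> t <= Num.sqrt N2.
Proof.
move=> h0 h; have s0 := sqrtr_ge0 N2; have := sqr_sqrtr h0.
move=> e; rewrite -e in h; move: (Num.sqrt N2) s0 h => N s0 h; rewrite !expr2 in h.
have [t0|t0] := leP t 0; first lra.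
rewrite leNgt; apply/negP => tN.
have : N * N < t * t by apply: (le_lt_trans (y := N * t)); [apply: ler_wpM2l; lra | rewrite ltr_pM2r //; lra].
lra.
Qed.

Lemma N2_le {R : realType} {d n : nat} (x : 'I_n -> 'rV[R]_d) (y : 'I_n -> R) w :
  (forall i, dotp (x i) (x i) <= 1) -> (forall i, y i ^+ 2 = 1) ->
  dotp (grad (logistic_loss x y) w) (grad (logistic_loss x y) w) <= GG x y w ^+ 2.
Proof.
move=> Hx Hy.
set v := grad (logistic_loss x y) w.
have E := dotp_grad x y w v; rewrite -/v in E.
have v0 := dotp_ge0 v.
set N := Num.sqrt (dotp v v).
have N0 : 0 <= N := sqrtr_ge0 _.
have NN : N ^+ 2 = dotp v v := sqr_sqrtr v0.
have each : forall i, - (y i * dotp (x i) v) <= N.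
  move=> i; apply: le_sqrt_abs => //.
  rewrite sqrrN exprMn Hy mul1r; apply: le_trans (CS _ _) _.
  by rewrite -[X in _ <= X]mul1r ler_wpM2r.
have h1 : dotp v v <= GG x y w * N.
  rewrite E /GG -mulrA -mulrN ler_wpM2l ?invr_ge0 ?ler0n // mulr_suml -sumrN.
  apply: ler_sum => i _; rewrite -mulrN ler_wpM2l //; exact: ltW (gg_gt0 _).
have G0 := GG_ge0 x y w.
have h2 : N <= GG x y w.
  rewrite -NN expr2 in h1; nra.
rewrite -NN; rewrite !expr2; nra.
Qed.

Lemma ws_grad {R : realType} {d n : nat} (x : 'I_n -> 'rV[R]_d) (y : 'I_n -> R) ws gamma w :
  (forall i, gamma <= y i * dotp (x i) ws) ->
  dotp ws (grad (logistic_loss x y) w) <= - (gamma * GG x y w).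
Proof.
move=> Hm; rewrite dotp_grad lerN2 /GG mulrCA ler_wpM2l ?invr_ge0 ?ler0n //.
rewrite mulr_sumr; apply: ler_sum => i _.
rewrite mulrC ler_wpM2l //; exact: ltW (gg_gt0 _).
Qed.

Lemma gG_le_N2 {R : realType} {d n : nat} (x : 'I_n -> 'rV[R]_d) (y : 'I_n -> R) ws gamma w :
  (forall i, gamma <= y i * dotp (x i) ws) -> dotp ws ws = 1 -> 0 <= gamma ->
  (gamma * GG x y w) ^+ 2 <=
    dotp (grad (logistic_loss x y) w) (grad (logistic_loss x y) w).
Proof.
move=> Hm Hw g0.
have h := ws_grad x y ws gamma w Hm.
have c := CS ws (grad (logistic_loss x y) w); rewrite Hw mul1r in c.
apply: le_trans c; have := GG_ge0 x y w => G0.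
have p0 : 0 <= gamma * GG x y w by exact: mulr_ge0.
rewrite !expr2; nra.
Qed.

Lemma L_convex {R : realType} {d n : nat} (x : 'I_n -> 'rV[R]_d) (y : 'I_n -> R) u w :
  dotp (u - w) (grad (logistic_loss x y) w) <= logistic_loss x y u - logistic_loss x y w.
Proof.
rewrite dotp_grad !LLE -mulrBr -mulrN ler_wpM2l ?invr_ge0 ?ler0n //.
rewrite -sumrN -sumrB; apply: ler_sum => i _.
have := lg_convex (y i * dotp (x i) w) (y i * dotp (x i) u).
rewrite dotpBr; lra.
Qed.

Lemma L_scale {R : realType} {d n : nat} (x : 'I_n -> 'rV[R]_d) (y : 'I_n -> R) ws gamma c :
  (forall i, gamma <= y i * dotp (x i) ws) -> 0 <= c ->
  logistic_loss x y (c *: ws) <= expR (- (c * gamma)).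
Proof.
move=> Hm c0; rewrite LLE.
case: n x y Hm => [|n] x y Hm; first by rewrite big_ord0 mulr0 expR_ge0.
have : \sum_(i < n.+1) lg (y i * dotp (x i) (c *: ws)) <= \sum_(i < n.+1) expR (- (c * gamma)).
  apply: ler_sum => i _; apply: le_trans (lg_le_exp _) _.
  rewrite ler_expR lerN2 dotpZr mulrCA; exact: ler_wpM2l.
rewrite sumr_const card_ord => h.
rewrite ler_pdivrMl ?ltr0n //; apply: le_trans h _.
by rewrite mulr_natl.
Qed.


Lemma sq_le_abs {R : realType} (t G : R) : 0 <= G -> t ^+ 2 <= G ^+ 2 -> `|t| <= G.
Proof.
move=> G0 h; rewrite ler_norml; rewrite !expr2 in h.
have [t0|t0] := leP t 0.
  apply/andP; split; last lra.
  rewrite lerNl leNgt; apply/negP => tN.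
  have : G * G < (- t) * (- t) by apply: (le_lt_trans (y := G * (- t))); [apply: ler_wpM2l; lra | rewrite ltr_pM2r //; lra].
  lra.
apply/andP; split; first lra.
rewrite leNgt; apply/negP => tN.
have : G * G < t * t by apply: (le_lt_trans (y := G * t)); [apply: ler_wpM2l; lra | rewrite ltr_pM2r //; lra].
lra.
Qed.

Lemma descent {R : realType} {d n : nat} (x : 'I_n -> 'rV[R]_d) (y : 'I_n -> R) eta w :
  (forall i, dotp (x i) (x i) <= 1) -> (forall i, y i ^+ 2 = 1) ->
  0 < eta -> eta * GG x y w <= 2/5 ->
  logistic_loss x y (w - eta *: grad (logistic_loss x y) w) <=
  logistic_loss x y w - eta * dotp (grad (logistic_loss x y) w) (grad (logistic_loss x y) w) / 3.
Proof.
move=> Hx Hy e0 eG.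
have N2G := N2_le x y w Hx Hy.
have E := dotp_grad x y w (grad (logistic_loss x y) w).
move: N2G E.
set v := grad (logistic_loss x y) w => N2G E.
set N2 := dotp v v.
have G0 := GG_ge0 x y w.
set G := GG x y w.
set z := fun i => y i * dotp (x i) w.
set a := fun i => y i * dotp (x i) v.
have aN : forall i, a i ^+ 2 <= N2.
  move=> i; rewrite /a exprMn Hy mul1r; apply: le_trans (CS _ _) _.
  by rewrite -[X in _ <= X]mul1r ler_wpM2r ?dotp_ge0.
have aG : forall i, `|a i| <= G.
  move=> i; apply: sq_le_abs => //; exact: le_trans (aN i) N2G.
have key : forall i, lg (y i * dotp (x i) (w - eta *: v)) <=
   lg (z i) - gg (z i) * (- (eta * a i)) + 5/3 * gg (z i) * (- (eta * a i)) ^+ 2.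
  move=> i.
  have -> : y i * dotp (x i) (w - eta *: v) = z i + - (eta * a i).
    by rewrite dotpBr dotpZr /z /a; ring.
  apply: lg_local; rewrite normrN normrM gtr0_norm //.
  apply: le_trans eG; rewrite ler_wpM2l ?(ltW e0) //; exact: aG i.
have sq : forall i, gg (z i) * (- (eta * a i)) ^+ 2 <= gg (z i) * (eta ^+ 2 * N2).
  move=> i; rewrite ler_wpM2l ?(ltW (gg_gt0 _)) // sqrrN exprMn ler_wpM2l //.
  by rewrite expr2 mulr_ge0 // ltW.
rewrite LLE.
have S1 : \sum_(i < n) lg (y i * dotp (x i) (w - eta *: v)) <=
   \sum_(i < n) lg (z i) + eta * \sum_(i < n) gg (z i) * a i
   + 5/3 * (eta ^+ 2 * N2) * \sum_(i < n) gg (z i).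
  apply: le_trans (ler_sum _ (fun i _ => key i)) _.
  rewrite big_split big_split /= mulr_sumr mulr_sumr -!big_split /=.
  apply: ler_sum => i _.
  have := sq i; nra.
have E' : n%:R^-1 * \sum_(i < n) gg (z i) * a i = - N2 by rewrite /N2 E opprK.
have LL : logistic_loss x y w = n%:R^-1 * \sum_(i < n) lg (z i) by [].
rewrite LL.
have n0 : 0 <= n%:R^-1 :> R by rewrite invr_ge0 ler0n.
have := ler_wpM2l n0 S1.
rewrite !mulrDr (mulrCA _ eta) E' (mulrCA _ (5/3 * _)) -/G.
have N0 : 0 <= N2 := dotp_ge0 v.
move=> h; apply: le_trans h _.
have : 5/3 * (eta ^+ 2 * N2) * G <= 2/3 * eta * N2.
  rewrite expr2.
  have : eta * G * (eta * N2) <= 2/5 * (eta * N2) by apply: ler_wpM2r => //; exact: mulr_ge0 (ltW e0) N0.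
  nra.
have GE : n%:R^-1 * \sum_(i < n) gg (z i) = G by [].
rewrite GE; lra.
Qed.


Lemma dotp_sub_sq {R : realType} {d : nat} (p v : 'rV[R]_d) (k : R) :
  dotp (p - k *: v) (p - k *: v) = dotp p p - 2 * k * dotp p v + k ^+ 2 * dotp v v.
Proof.
rewrite !dotpBl !dotpBr !dotpZl !dotpZr (dotpC v p); ring.
Qed.

Lemma inv_step {R : realType} (L L' a : R) :
  0 < L' -> 0 < L -> 0 <= a -> L' <= L - a * L ^+ 2 -> L^-1 + a <= L'^-1.
Proof.
move=> h1 h2 h3 h4.
have h5 : (L^-1 + a) * L' <= 1.
  have e : (L^-1 + a) * (L - a * L ^+ 2) = 1 - a ^+ 2 * L ^+ 2 by field; lra.
  have : (L^-1 + a) * L' <= (L^-1 + a) * (L - a * L ^+ 2).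
    by apply: ler_wpM2l => //; apply: addr_ge0 => //; rewrite invr_ge0 ltW.
  rewrite e => h; apply: le_trans h _; rewrite lerBlDr lerDl.
  by rewrite mulr_ge0 // sqr_ge0.
by rewrite -(ler_pM2r h1) mulVf ?gt_eqF.
Qed.

Lemma phase2 {R : realType} {d n : nat} (x : 'I_n -> 'rV[R]_d) (y : 'I_n -> R)
  ws gamma eta k0 :
  (forall i, dotp (x i) (x i) <= 1) -> (forall i, y i ^+ 2 = 1) ->
  (forall i, gamma <= y i * dotp (x i) ws) -> dotp ws ws = 1 ->
  (0 < n)%N -> 0 < gamma -> n%:R <= eta -> 0 < eta ->
  logistic_loss x y (gd (logistic_loss x y) eta k0) <= 2 / (5 * eta) ->
  forall m, logistic_loss x y (gd (logistic_loss x y) eta (k0 + m)) <= 2 / (5 * eta) /\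
    m%:R * (eta * gamma ^+ 2 / 12) <=
      (logistic_loss x y (gd (logistic_loss x y) eta (k0 + m)))^-1.
Proof.
move=> Hx Hy Hm Hw n0 g0 ne e0 Lk0; elim=> [|m [IH1 IH2]].
  by rewrite addn0 mul0r invr_ge0 L_ge0.
rewrite addnS /=.
set W := gd (logistic_loss x y) eta (k0 + m).
move: IH1 IH2; rewrite -/W => IH1 IH2.
have G0 := GG_ge0 x y W.
have GL := GG_le_L x y W.
have eG : eta * GG x y W <= 2/5.
  have : eta * GG x y W <= eta * (2 / (5 * eta)).
    by apply: ler_wpM2l; [exact: ltW | exact: le_trans GL IH1].
  have -> : eta * (2 / (5 * eta)) = 2/5 by field; lra.
  done.
have nG : n%:R * GG x y W <= 2/5.
  apply: le_trans eG; apply: ler_wpM2r => //.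
have L2G := L_le_2GG x y W nG.
have D := descent x y eta W Hx Hy e0 eG.
have N2 := gG_le_N2 x y ws gamma W Hm Hw (ltW g0).
have Lp := L_gt0 x y (W - eta *: grad (logistic_loss x y) W) n0.
have L0 := L_gt0 x y W n0.
set Lk := logistic_loss x y W.
set L' := logistic_loss x y (W - eta *: grad (logistic_loss x y) W).
move: D N2 Lp L2G GL; rewrite -/Lk -/L' => D N2 Lp L2G GL.
set G := GG x y W.
set N := dotp (grad (logistic_loss x y) W) (grad (logistic_loss x y) W).
move: D N2 L2G GL G0; rewrite -/G -/N => D N2 L2G GL G0.
have step : L' <= Lk - (eta * gamma ^+ 2 / 12) * Lk ^+ 2.
  have h1 : gamma ^+ 2 * Lk ^+ 2 <= 4 * (gamma * G) ^+ 2.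
    have hL : Lk ^+ 2 <= 4 * G ^+ 2.
      have : Lk * Lk <= (2 * G) * (2 * G) by apply: ler_pM; lra.
      by rewrite !expr2; lra.
    apply: le_trans (ler_wpM2l (sqr_ge0 gamma) hL) _.
    by rewrite [(gamma * G) ^+ 2]exprMn mulrCA.
  have h2 : eta * (gamma ^+ 2 * Lk ^+ 2) <= eta * (4 * N).
    apply: ler_wpM2l; [exact: ltW | lra].
  lra.
split.
  apply: le_trans IH1; apply: le_trans step _.
  rewrite lerBlDr lerDl mulr_ge0 ?sqr_ge0 // mulr_ge0 // mulr_ge0 ?sqr_ge0 ?ltW //.
have a0 : 0 <= eta * gamma ^+ 2 / 12 by rewrite mulr_ge0 // mulr_ge0 ?sqr_ge0 ?ltW.
have := @inv_step R Lk L' _ Lp L0 a0 step.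
move: IH2; rewrite -/Lk -[m.+1]addn1 natrD mulrDl mul1r; lra.
Qed.


Lemma phase1 {R : realType} {d n : nat} (x : 'I_n -> 'rV[R]_d) (y : 'I_n -> R)
  ws gamma eta c1 c2 :
  (forall i, dotp (x i) (x i) <= 1) -> (forall i, y i ^+ 2 = 1) ->
  (forall i, gamma <= y i * dotp (x i) ws) -> dotp ws ws = 1 ->
  0 < gamma -> 0 < eta -> 0 <= c1 -> 0 <= c2 -> 2 * c2 * gamma = eta ->
  forall t,
  dotp (gd (logistic_loss x y) eta t - (c1 + c2) *: ws)
       (gd (logistic_loss x y) eta t - (c1 + c2) *: ws)
    <= (c1 + c2) ^+ 2 + 2 * eta * t%:R * expR (- (c1 * gamma)) /\
  eta * gamma * \sum_(k < t) GG x y (gd (logistic_loss x y) eta k)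
    <= dotp (gd (logistic_loss x y) eta t) ws.
Proof.
move=> Hx Hy Hm Hw g0 e0 c10 c20 cg; elim=> [|t [IH1 IH2]].
  rewrite /= dotp_sub_sq big_ord0 mulr0 (dotpC 0) !dotp0r Hw.
  by rewrite !mulr0 !mul0r !subr0 add0r addr0 mulr1 lexx.
rewrite /=.
set W := gd (logistic_loss x y) eta t.
move: IH1 IH2; rewrite -/W => IH1 IH2.
set v := grad (logistic_loss x y) W.
set c := c1 + c2.
have E1 : W - eta *: v - c *: ws = (W - c *: ws) - eta *: v by rewrite addrAC.
have conv := L_convex x y (c1 *: ws) W.
have Ls := L_scale x y ws gamma c1 Hm c10.
have LW := L_ge0 x y W.
have wsg := ws_grad x y ws gamma W Hm.
have N2 := N2_le x y W Hx Hy.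
have G1 := GG_le1 x y W.
have G0 := GG_ge0 x y W.
move: conv wsg N2; rewrite -/v => conv wsg N2.
rewrite dotpBl dotpZl in conv.
set G := GG x y W.
move: wsg N2 G1 G0; rewrite -/G => wsg N2 G1 G0.
set dW := dotp W v; set dws := dotp ws v; set N := dotp v v.
move: conv wsg N2; rewrite -/dW -/dws -/N => conv wsg N2.
split.
  rewrite E1 dotp_sub_sq [dotp (W - c *: ws) v]dotpBl dotpZl -/dW -/dws -/N.
  have h1 : - dW + c1 * dws <= expR (- (c1 * gamma)) by lra.
  have h2 : c2 * dws <= - (c2 * gamma * G).
    by rewrite -mulrA -mulrN; apply: ler_wpM2l.
  have h3 : N <= G by apply: le_trans N2 _; rewrite expr2 ler_piMl.
  have h4 : eta ^+ 2 * N <= eta ^+ 2 * G by apply: ler_wpM2l => //; rewrite sqr_ge0.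
  have h5 : 2 * eta * (c2 * gamma * G) = eta ^+ 2 * G by rewrite -cg; ring.
  have h6 : 2 * eta * (- dW + c1 * dws) <= 2 * eta * expR (- (c1 * gamma)).
    by apply: ler_wpM2l => //; rewrite mulr_ge0 // ltW.
  have h7 : 2 * eta * (c2 * dws) <= 2 * eta * (- (c2 * gamma * G)).
    by apply: ler_wpM2l => //; rewrite mulr_ge0 // ltW.
  rewrite -[t.+1]addn1 natrD.
  have h8 : 2 * eta * (dW - c * dws) = - (2 * eta * (- dW + c1 * dws)) - 2 * eta * (c2 * dws).
    by rewrite /c; ring.
  rewrite h8; move: IH1; rewrite -/c; lra.
rewrite big_ord_recr /= dotpBl dotpZl (dotpC v ws) -/dws mulrDr.
have : eta * gamma * G <= - (eta * dws).
  rewrite -mulrA -mulrN; apply: ler_wpM2l; [exact: ltW | lra].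
rewrite -/W -/G; move: IH2; lra.
Qed.


Lemma e_ge2 {R : realType} : 2 <= expR 1 :> R.
Proof. by have := @expR_ge1Dx R 1. Qed.

Lemma e_le4 {R : realType} : expR 1 <= 4 :> R.
Proof.
have h := @expR_ge1Dx R (- (1/2)).
have p := @expR_gt0 R (1/2).
have m : expR (1/2) * expR (- (1/2)) = 1 :> R by rewrite expRxMexpNx_1.
have h2 : expR (1/2) <= 2 :> R by nra.
have -> : (1 : R) = 1/2 + 1/2 by field.
rewrite expRD; nra.
Qed.

Lemma e6 {R : realType} : expR (- 6) <= 1/64 :> R.
Proof.
have -> : (- 6 : R) = - (6%:R * 1) by rewrite mulr1.
rewrite expRN expRM_natl.
have h := @e_ge2 R.
have : 2 ^+ 6 <= expR 1 ^+ 6 :> R by apply: lerXn2r; rewrite ?nnegrE //; lra.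
move=> h6.
have q : (64 : R) = 2 ^+ 6 by rewrite -natrX.
have p6 : 0 < expR 1 ^+ 6 :> R by rewrite exprn_gt0 // expR_gt0.
rewrite div1r lef_pV2 ?posrE //; lra.
Qed.

Lemma final_ineq {R : realType} (L X : R) : 0 < L -> X * L <= 2880 -> 64 <= X ->
  L <= 480 * (ln X ^+ 2 / X).
Proof.
move=> L0 h X64.
have X0 : 0 < X by lra.
have e3 : expR 3 <= X.
  have -> : (3 : R) = 3%:R * 1 by rewrite mulr1.
  rewrite expRM_natl; apply: le_trans X64.
  have := @e_le4 R; have := @e_ge2 R => a b.
  have -> : (64 : R) = 4 ^+ 3 by rewrite -natrX.
  by apply: lerXn2r; rewrite ?nnegrE //; lra.
have l3 : 3 <= ln X by rewrite -ler_expR lnK ?posrE.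
have l9 : 9 <= ln X ^+ 2 by rewrite expr2; nra.
rewrite mulrA ler_pdivlMr //.
have : L * X <= 480 * 6 by lra.
move=> h1; apply: le_trans h1 _; nra.
Qed.


Lemma tau_part {R : realType} (n : nat) (gamma eta T : R) :
  0 < gamma -> expR 1 <= eta -> n%:R <= eta -> eta = gamma ^+ 2 * T / 120 ->
  60 / gamma ^+ 2 *
    Num.max eta (Num.max (n%:R) (Num.max (expR 1)
      ((eta + n%:R) / eta * ln ((eta + n%:R) / eta)))) <= T / 2.
Proof.
move=> g0 he hn et.
have e2 := @e_ge2 R.
have e0 : 0 < eta by lra.
have n0 : 0 <= n%:R :> R by rewrite ler0n.
set r := (eta + n%:R) / eta.
have r1 : 1 <= r by rewrite /r ler_pdivlMr // mul1r; lra.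
have r2 : r <= 2 by rewrite /r ler_pdivrMr //; lra.
have lr : ln r <= 1.
  have := @le_ln1Dx R (r - 1) ltac:(lra); rewrite addrC subrK; lra.
have lr0 : 0 <= ln r by exact: ln_ge0.
have rl : r * ln r <= eta by nra.
have M : Num.max eta (Num.max (n%:R) (Num.max (expR 1) (r * ln r))) <= eta.
  by rewrite !ge_max lexx he hn rl.
have g2 : 0 < gamma ^+ 2 by rewrite exprn_gt0.
apply: le_trans (_ : 60 / gamma ^+ 2 * eta <= _).
  by apply: ler_wpM2l => //; rewrite divr_ge0 // ltW.
rewrite et le_eqVlt; apply/orP; left; apply/eqP.
by field; rewrite gt_eqF.
Qed.

Lemma loss_part {R : realType} {d n : nat} (x : 'I_n -> 'rV[R]_d) (y : 'I_n -> R)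
  ws gamma eta (T : nat) :
  (forall i, dotp (x i) (x i) <= 1) -> (forall i, y i ^+ 2 = 1) ->
  (forall i, gamma <= y i * dotp (x i) ws) -> dotp ws ws = 1 ->
  (0 < n)%N -> 0 < gamma -> expR 1 <= eta -> n%:R <= eta ->
  eta = gamma ^+ 2 * T%:R / 120 ->
  logistic_loss x y (gd (logistic_loss x y) eta T) <=
    480 * (ln (gamma ^+ 4 * T%:R ^+ 2) ^+ 2 / (gamma ^+ 4 * T%:R ^+ 2)).
Proof.
move=> Hx Hy Hm Hw n0 g0 he hn et.
have e2 := @e_ge2 R.
have e0 : 0 < eta by lra.
have g2 : 0 < gamma ^+ 2 by rewrite exprn_gt0.
have gT : gamma ^+ 2 * T%:R = 120 * eta by rewrite et; field.
set t := (T - T./2)%N.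
have HT := odd_double_half T.
have oT : (odd T <= 1)%N by case: (odd T).
have t2 : (T <= 2 * t)%N.
  rewrite /t; rewrite -muln2 in HT; lia.
have t2R : T%:R <= 2 * t%:R :> R by rewrite -[2]/(2%:R) -natrM ler_nat.
have ut : 60 * eta <= gamma ^+ 2 * t%:R.
  have := ler_wpM2l (ltW g2) t2R; lra.
have tpos : 0 < t%:R :> R.
  have : 0 < gamma ^+ 2 * t%:R by lra.
  by rewrite pmulr_rgt0.
set c1 := 6 / gamma; set c2 := eta / (2 * gamma).
have c10 : 0 <= c1 by rewrite divr_ge0 // ltW.
have c20 : 0 <= c2 by rewrite divr_ge0 // ?mulr_ge0 // ltW.
have cg : 2 * c2 * gamma = eta by rewrite /c2; field; rewrite gt_eqF.
have [P1 P2] := phase1 x y ws gamma eta c1 c2 Hx Hy Hm Hw g0 e0 c10 c20 cg t.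
have c1g : c1 * gamma = 6 by rewrite /c1; field; rewrite gt_eqF.
rewrite c1g in P1.
set W := gd (logistic_loss x y) eta.
move: P1 P2; rewrite -/W => P1 P2.
set c := c1 + c2.
have cs := CS (W t - c *: ws) ws.
rewrite Hw mulr1 dotpBl dotpZl Hw mulr1 in cs.
set A := dotp (W t) ws.
move: P2 cs; rewrite -/A => P2 cs.
have E6 := @e6 R.
have [k0P|nk] := boolP [exists k : 'I_t, GG x y (W k) <= 1 / (5 * eta)]; last first.
  exfalso.
  have nk' : forall k : 'I_t, 1 / (5 * eta) <= GG x y (W k).
    move=> k; rewrite leNgt; apply/negP => hk; move/negP: nk; apply.
    by apply/existsP; exists k; exact: ltW.
  have S : t%:R * (1 / (5 * eta)) <= \sum_(k < t) GG x y (W k).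
    have S0 : \sum_(k < t) (1 / (5 * eta)) <= \sum_(k < t) GG x y (W k).
      by apply: ler_sum => k _; exact: nk' k.
    by rewrite sumr_const card_ord in S0; rewrite mulr_natl.
  set B := gamma * t%:R / 5.
  have AB : B <= A.
    apply: le_trans P2; have := ler_wpM2l (ltW (mulr_gt0 e0 g0)) S.
    have -> : eta * gamma * (t%:R * (1 / (5 * eta))) = B by rewrite /B; field; lra.
    done.
  have cgam : c * gamma = 6 + eta / 2 by rewrite /c mulrDl c1g; rewrite -cg; field.
  have Bg : B * gamma = gamma ^+ 2 * t%:R / 5 by rewrite /B; ring.
  have hBc : c < B.
    rewrite -(ltr_pM2r g0) cgam Bg; lra.
  have hsq : (B - c) ^+ 2 <= (A - c) ^+ 2.
    rewrite !expr2; apply: ler_pM; lra.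
  set u := gamma ^+ 2 * t%:R.
  move: ut Bg; rewrite -/u => ut Bg.
  have hE : (c ^+ 2 + 2 * eta * t%:R * expR (- 6)) * gamma ^+ 2 < (B - c) ^+ 2 * gamma ^+ 2.
    have l : (c ^+ 2 + 2 * eta * t%:R * expR (- 6)) * gamma ^+ 2
      = (c * gamma) ^+ 2 + 2 * eta * u * expR (- 6) by rewrite /u; ring.
    have r : (B - c) ^+ 2 * gamma ^+ 2 = (B * gamma - c * gamma) ^+ 2 by ring.
    rewrite l r cgam Bg.
    have u0 : 0 < u by lra.
    have h1 : 2 * eta * u * expR (- 6) <= eta * u / 32.
      have : 0 <= 2 * eta * u by rewrite mulr_ge0 // ?mulr_ge0 // ltW.
      move=> p; have := ler_wpM2l p E6; lra.
    have h2 : 0 < u * (u / 25 - 2 * (6 + eta / 2) / 5 - eta / 32).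
      apply: mulr_gt0 => //; lra.
    rewrite !expr2; nra.
  have := le_trans cs P1; rewrite -/c => h.
  have : (A - c) ^+ 2 * gamma ^+ 2 < (A - c) ^+ 2 * gamma ^+ 2.
    apply: le_lt_trans (_ : _ <= (c ^+ 2 + 2 * eta * t%:R * expR (- 6)) * gamma ^+ 2) _.
      by rewrite ler_pM2r.
    apply: lt_le_trans hE _; by rewrite ler_pM2r.
  by rewrite ltxx.
case/existsP: k0P => k0 hk0.
have k0t : (k0 < t)%N := ltn_ord k0.
have HT2 : (odd T + T./2 * 2)%N = T by rewrite muln2 odd_double_half.
have k0T : (k0 <= T)%N by move: k0t HT2 oT; rewrite /t; clear; lia.
have G0 := GG_ge0 x y (W k0).
have nG : n%:R * GG x y (W k0) <= 2/5.
  have : n%:R * GG x y (W k0) <= eta * (1 / (5 * eta)).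
    by apply: ler_pM => //; rewrite ler0n.
  have -> : eta * (1 / (5 * eta)) = 1/5 by field; rewrite gt_eqF.
  lra.
have Lk0 : logistic_loss x y (W k0) <= 2 / (5 * eta).
  apply: le_trans (L_le_2GG x y (W k0) nG) _.
  have -> : 2 / (5 * eta) = 2 * (1 / (5 * eta)) by field; rewrite gt_eqF.
  lra.
have [_ P] := phase2 x y ws gamma eta k0 Hx Hy Hm Hw n0 g0 hn e0 Lk0 (T - k0).
rewrite subnKC // in P.
have LT := L_gt0 x y (W T) n0.
move: P LT; rewrite -/W => P LT.
set LT' := logistic_loss x y (W T).
move: P LT; rewrite -/LT' => P LT.
have mT : T%:R <= 2 * (T - k0)%:R :> R.
  rewrite -[2]/(2%:R) -natrM ler_nat; move: k0t HT2 oT; rewrite /t; clear; lia.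
rewrite -(ler_pM2r LT) mulVf ?gt_eqF // in P.
have X : gamma ^+ 4 * T%:R ^+ 2 = 120 * eta * (gamma ^+ 2 * T%:R).
  by rewrite -gT; ring.
apply: final_ineq => //.
  rewrite X.
  set K := 120 * eta * gamma ^+ 2 * LT'.
  have p : 0 <= K by rewrite /K; apply: mulr_ge0; [apply: mulr_ge0; [apply: mulr_ge0; [by [] | exact: ltW] | exact: sqr_ge0] | exact: ltW].
  have h := ler_wpM2l p mT.
  have h1 : 120 * eta * (gamma ^+ 2 * T%:R) * LT' = K * T%:R by rewrite /K; ring.
  have h2 : K * (2 * (T - k0)%:R) = 2880 * ((T - k0)%:R * (eta * gamma ^+ 2 / 12) * LT').
    by rewrite /K; field.
  rewrite h1; lra.
rewrite X gT.
have h : 240 * 240 <= 120 * eta * (120 * eta) by apply: ler_pM; lra.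
lra.
Qed.


Theorem mainTheorem2 (R : realType) (d n : nat)
  (x : 'I_n -> 'rV[R]_d) (y : 'I_n -> R) (gamma : R) (wstar : 'rV[R]_d)
  (T : nat) :
  (forall i, enorm (x i) <= 1) ->
  (forall i, y i = 1 \/ y i = -1) ->
  0 < gamma ->
  enorm wstar = 1 ->
  (forall i, gamma <= y i * dotp (x i) wstar) ->
  120 * Num.max (expR 1) (n%:R) / gamma ^+ 2 <= T%:R ->
  let eta := gamma ^+ 2 * T%:R / 120 in
  let tau := 60 / gamma ^+ 2 *
    Num.max eta (Num.max (n%:R) (Num.max (expR 1)
      ((eta + n%:R) / eta * ln ((eta + n%:R) / eta)))) in
  tau <= T%:R / 2 /\
  logistic_loss x y (gd (logistic_loss x y) eta T) <=
    480 * (ln (gamma ^+ 4 * T%:R ^+ 2) ^+ 2 / (gamma ^+ 4 * T%:R ^+ 2)).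
Proof.
move=> Hx0 Hy0 g0 Hw0 Hm Hmax eta tau.
have Hx : forall i, dotp (x i) (x i) <= 1 := fun i => enorm_le1 (x i) (Hx0 i).
have Hy : forall i, y i ^+ 2 = 1.
  by move=> i; case: (Hy0 i) => ->; rewrite ?sqrrN expr1n.
have Hw := enorm_eq1 wstar Hw0.
have g2 : 0 < gamma ^+ 2 by rewrite exprn_gt0.
have hmax : Num.max (expR 1) n%:R <= eta.
  rewrite ler_pdivrMr // in Hmax.
  by rewrite /eta ler_pdivlMr //; lra.
move: hmax; rewrite ge_max => /andP [he hn].
have et : eta = gamma ^+ 2 * T%:R / 120 by [].
split; first exact: tau_part g0 he hn et.
case: n x y Hm Hx0 Hy0 Hmax hn Hx Hy tau => [|n] x y Hm Hx0 Hy0 Hmax hn Hx Hy tau.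
  rewrite /logistic_loss big_ord0 mulr0.
  apply: mulr_ge0 => //; apply: divr_ge0; first exact: sqr_ge0.
  by rewrite mulr_ge0 // ?exprn_ge0 ?ltW.
exact: loss_part x y wstar gamma eta T Hx Hy Hm Hw isT g0 he hn et.
Qed.
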